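(* Let $G$ be a finite group, and let $H$ be a normal subgroup of $G$ such that $G/H$ is cyclic. Let $K$ be a subgroup with $H\le K\le G$. Then the $G$-conjugacy classes contained in $K$ whose centralizing subgroup (with respect to $H$) is $K$ are equally distributed between the cosets of $H$ in $K$; that is, for any two cosets $Hx, Hy$ of $H$ contained in $K$, the number of $G$-conjugacy classes contained in $Hx$ with centralizing subgroup $K$ equals the number of $G$-conjugacy classes contained in $Hy$ with centralizing subgroup $K$.
   Context: For $g\in G$, the centralizing subgroup of $g$ with respect to $H$ is $\Delta_g = HC_G(g)$, the subgroup generated by $H$ and the centralizer $C_G(g)$. For a conjugacy class $X$ of $G$, its centralizing subgroup is $\Delta_X=\Delta_g$ for any $g\in X$ (this is independent of the choice of $g$). Since $G/H$ is abelian, each $G$-conjugacy class lies in a single coset of $H$. *)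

(* Defs.v *)
From mathcomp Require Import all_boot all_fingroup all_solvable.
Set Implicit Arguments. Unset Strict Implicit. Unset Printing Implicit Defensive.
Local Open Scope group_scope.

Definition centralizing (gT : finGroupType) (G H : {set gT}) (g : gT) : {set gT} :=
  H <*> 'C_G[g].

Definition centralizing_class (gT : finGroupType) (G H X : {set gT}) : {set gT} :=
  centralizing G H (repr X).

Definition nclasses_coset (gT : finGroupType) (G H K : {set gT}) (x : gT) : nat :=
  #|[set X in classes G | (X \subset H :* x) && (centralizing_class G H X == K)]|.

(* Main.v *)
Require Import Defs.
From mathcomp Require Import all_boot all_fingroup all_solvable.
From mathcomp Require Import zify.
Set Implicit Arguments. Unset Strict Implicit. Unset Printing Implicit Defensive.
Local Open Scope group_scope.

Lemma DE (gT : finGroupType) (G H : {group gT}) g :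
  H <| G -> centralizing G H g = H * 'C_G[g].
Proof.
move=> nHG; rewrite /centralizing norm_joinEr //.
exact: subset_trans (subsetIl _ _) (normal_norm nHG).
Qed.

Lemma D_sub (gT : finGroupType) (G H : {group gT}) g :
  H <| G -> centralizing G H g \subset G.
Proof.
by move=> nHG; rewrite /centralizing join_subG (normal_sub nHG) subsetIl.
Qed.

Lemma D_normal (gT : finGroupType) (G H : {group gT}) g :
  H <| G -> abelian (G / H) -> centralizing G H g <| G.
Proof.
move=> nHG ab; apply: sub_der1_normal; last exact: D_sub.
apply: subset_trans (der1_min (normal_norm nHG) ab) _.
exact: joing_subl.
Qed.

Lemma DJ (gT : finGroupType) (G H : {group gT}) a b :
  H <| G -> abelian (G / H) -> b \in G ->
  centralizing G H (a ^ b) = centralizing G H a.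
Proof.
move=> nHG ab bG.
have /normP <- : b \in 'N(centralizing G H a).
  by apply: (subsetP (normal_norm (D_normal a nHG ab))).
rewrite !DE // conjsMg cent1J conjIg.
have /normP -> := subsetP (normal_norm nHG) b bG.
by rewrite (normP (subsetP (normG G) b bG)).
Qed.

Lemma cosetJ (gT : finGroupType) (G H : {group gT}) a b x :
  H <| G -> abelian (G / H) -> a \in G -> b \in G -> x \in G ->
  (a ^ b \in H :* x) = (a \in H :* x).
Proof.
move=> nHG ab aG bG xG.
have nH := subsetP (normal_norm nHG).
have abG : a ^ b \in G by rewrite groupJ.
have E : coset H (a ^ b) = coset H a.
  rewrite morphJ ?nH //.
  have cab : commute (coset H a) (coset H b).
    by apply: (centsP ab); apply: mem_quotient.
  by rewrite conjgE /= cab mulKg.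
apply/idP/idP.
- move/(rcoset_kercosetP (nH _ abG) (nH _ xG)) => E2.
  by apply/(rcoset_kercosetP (nH _ aG) (nH _ xG)); rewrite -E.
- move/(rcoset_kercosetP (nH _ aG) (nH _ xG)) => E2.
  by apply/(rcoset_kercosetP (nH _ abG) (nH _ xG)); rewrite E.
Qed.

Lemma cardCJ (gT : finGroupType) (G : {group gT}) a b :
  b \in G -> #|'C_G[a ^ b]| = #|'C_G[a]|.
Proof.
move=> bG; rewrite cent1J -{1}(normP (subsetP (normG G) b bG)) -conjIg.
exact: cardJg.
Qed.

Lemma rcoset_subG (gT : finGroupType) (G H : {group gT}) x g :
  H \subset G -> x \in G -> g \in H :* x -> g \in G.
Proof.
move=> sHG xG; rewrite mem_rcoset => /(subsetP sHG) h.
by rewrite -(mulgKV x g) groupM.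
Qed.

Lemma step1 (gT : finGroupType) (G H K : {group gT}) x :
  H <| G -> abelian (G / H) -> x \in G ->
  (#|G| * nclasses_coset G H K x =
   \sum_(g in H :* x | centralizing G H g == K) #|'C_G[g]|)%N.
Proof.
move=> nHG ab xG.
have sHG := normal_sub nHG.
rewrite /nclasses_coset -[X in (_ * X)%N]sum1_card big_distrr /= muln1.
rewrite [RHS](eq_bigl (fun g => (g \in G) && ((g \in H :* x) && (centralizing G H g == K)))); last first.
  move=> g /=; case: (boolP (g \in H :* x)) => //= gx.
  by rewrite (rcoset_subG sHG xG gx).
  by rewrite andbF.
rewrite [RHS](partition_big (fun g => g ^: G) (fun X => X \in classes G)) /=; last first.
  by move=> g /andP [gG _]; apply: mem_classes.
rewrite [LHS](eq_bigl (fun X => (X \in classes G) && ((X \subset H :* x) && (centralizing_class G H X == K)))); last first.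
  by move=> X; rewrite inE.
rewrite big_mkcondr /=.
apply: eq_bigr => X /imsetP [a aG ->].
have clP : forall g, g \in a ^: G -> exists2 b, b \in G & g = a ^ b.
  by move=> g /imsetP [b bG ->]; exists b.
have -> : (a ^: G \subset H :* x) && (centralizing_class G H (a ^: G) == K)
    = (a \in H :* x) && (centralizing G H a == K).
  congr andb.
    apply/subsetP/idP => [sub | ax g /clP [b bG ->]]; first by apply: sub; apply: class_refl.
    by rewrite (cosetJ nHG ab aG bG xG).
  rewrite /centralizing_class; have /clP [b bG ->] := mem_repr _ (class_refl G a).
  by rewrite (DJ _ nHG ab bG).
rewrite (eq_bigl (fun g => (g \in a ^: G) && ((a \in H :* x) && (centralizing G H a == K)))); last first.
  move=> g; case: (boolP (g \in a ^: G)) => [/clP [b bG ->] | ng] /=.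
    by rewrite groupJ // (cosetJ nHG ab aG bG xG) (DJ _ nHG ab bG) (classGidl _ bG) eqxx andbT.
  case: (boolP (g ^: G == a ^: G)) => [/eqP e | _]; last by rewrite andbF.
  by move: ng; rewrite -e class_refl.
case: ((a \in H :* x) && (centralizing G H a == K)); last first.
  by rewrite big_pred0 // => g; rewrite andbF.
rewrite (eq_bigl (fun g => g \in a ^: G)); last by move=> g; rewrite andbT.
rewrite (eq_bigr (fun _ => #|'C_G[a]|)); last by move=> g /clP [b bG ->]; rewrite cardCJ.
rewrite sum_nat_const -index_cent1 mulnC.
by rewrite Lagrange // subsetIl.
Qed.


Lemma cardB (gT : finGroupType) (H : {group gT}) y g z :
  z \in H :* y -> z \in 'C[g] -> #|H :* y :&: 'C[g]| = #|'C_H[g]|.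
Proof.
move=> /rcoset_eqP <- zC; rewrite -[RHS](card_rcoset _ z); congr #|pred_of_set _|.
apply/setP => c; rewrite in_setI !mem_rcoset in_setI.
by rewrite (groupMr _ (groupVr zC)).
Qed.

Lemma card_sum (gT : finGroupType) (A B : {set gT}) :
  #|A :&: B| = (\sum_(c in A) (if c \in B then 1 else 0))%N.
Proof.
rewrite -sum1_card -big_mkcondr /=; apply: eq_bigl => c; by rewrite inE.
Qed.

Lemma Aval (gT : finGroupType) (G H K : {group gT}) m x :
  H <| G -> H \subset K -> K \subset G -> m \in K -> K / H = <[coset H m]> ->
  x \in K ->
  (\sum_(g in H :* x | K \subset centralizing G H g) #|'C_H[g]| =
   \sum_(c in H :* m) #|'C_H[c]|)%N.
Proof.
move=> nHG sHK sKG mK defK xK.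
have sHG := normal_sub nHG.
have nH := subsetP (normal_norm nHG).
have mG := subsetP sKG m mK.
have xG := subsetP sKG x xK.
rewrite big_mkcondr /=.
rewrite (eq_bigr (fun g => #|H :* m :&: 'C[g]|)); last first.
  move=> g gx; have gG := rcoset_subG sHG xG gx.
  case: (boolP (K \subset centralizing G H g)) => [sKD | nsKD].
    have : m \in centralizing G H g by apply: (subsetP sKD).
    rewrite DE // => /mulsgP [h c hH /setIP [cG cC] mE].
    apply/esym/(cardB (z := c)) => //.
    by rewrite mem_rcoset mE invMg mulgA mulgV mul1g groupV.
  apply/esym/eqP; rewrite cards_eq0; apply/eqP/setP => c; rewrite in_setI in_set0.
  apply/negP => /andP [cm cC]; case/negP: nsKD.
  have cG := rcoset_subG sHG mG cm.
  rewrite -(quotientSGK (subset_trans sKG (normal_norm nHG)) (joing_subl _ _)).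
  rewrite defK cycle_subG.
  have <- : coset H c = coset H m by apply/rcoset_kercosetP; rewrite ?nH.
  apply: mem_quotient; apply: (subsetP (joing_subr _ _)).
  by apply/setIP.
rewrite (eq_bigr (fun g => \sum_(c in H :* m) (if c \in 'C[g] then 1 else 0))%N); last first.
  by move=> g _; rewrite card_sum.
rewrite exchange_big /=.
apply: eq_bigr => c cm.
have cG := rcoset_subG sHG mG cm.
rewrite (eq_bigr (fun g => if g \in 'C[c] then 1 else 0)%N); last first.
  by move=> g _; rewrite cent1C.
rewrite -card_sum.
have /cycleP [k ek] : coset H x \in <[coset H m]> by rewrite -defK mem_quotient.
apply: (cardB (z := c ^+ k)).
  apply/rcoset_kercosetP; rewrite ?groupX ?nH //.
  rewrite morphX ?nH // ek; congr (_ ^+ k).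
  by apply/rcoset_kercosetP; rewrite ?nH.
by apply/cent1P; apply: commute_sym; apply: commuteX.
Qed.

Definition Bsum (gT : finGroupType) (G H : {group gT}) (M : {set gT}) x :=
  (\sum_(g in H :* x | centralizing G H g == M) #|'C_H[g]|)%N.

Lemma Aindep (gT : finGroupType) (G H K : {group gT}) x y :
  H <| G -> cyclic (G / H) -> H \subset K -> K \subset G -> x \in K -> y \in K ->
  (\sum_(g in H :* x | K \subset centralizing G H g) #|'C_H[g]| =
   \sum_(g in H :* y | K \subset centralizing G H g) #|'C_H[g]|)%N.
Proof.
move=> nHG cyc sHK sKG xK yK.
have /cyclicP [u defK] := cyclicS (quotientS H sKG) cyc.
have : u \in K / H by rewrite defK cycle_id.
case/morphimP => k kN kK uE.
rewrite uE in defK.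
by rewrite !(Aval nHG sHK sKG kK defK).
Qed.

Lemma step2 (gT : finGroupType) (G H K : {group gT}) x :
  H <| G -> x \in G ->
  (#|H| * \sum_(g in H :* x | centralizing G H g == K) #|'C_G[g]| =
   #|K| * Bsum G H K x)%N.
Proof.
move=> nHG xG; have sHG := normal_sub nHG.
rewrite /Bsum !big_distrr /=; apply: eq_bigr => g /andP [gx /eqP DK].
rewrite (mul_cardG H [group of 'C_G[g]]) /= -DE // DK.
by rewrite setIA (setIidPl sHG).
Qed.

Lemma stepK (gT : finGroupType) (G H K : {group gT}) :
  H <| G -> cyclic (G / H) -> H \subset K -> K \subset G ->
  (forall M : {group gT}, K \proper M -> M \subset G ->
     forall x y, x \in M -> y \in M -> Bsum G H M x = Bsum G H M y) ->
  forall x y, x \in K -> y \in K -> Bsum G H K x = Bsum G H K y.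
Proof.
move=> nHG cyc sHK sKG IH.
have split : forall x, (\sum_(g in H :* x | K \subset centralizing G H g) #|'C_H[g]| =
   Bsum G H K x + \sum_(M : {group gT} | (K \proper M) && (M \subset G)) Bsum G H M x)%N.
  move=> x.
  rewrite (bigID (fun g => centralizing G H g == K)) /=; congr addn.
    apply: eq_bigl => g; case: eqP => [-> | _]; first by rewrite subxx andbT.
    by rewrite !andbF.
  rewrite (eq_bigl (fun g => (g \in H :* x) && (K \proper centralizing G H g))); last first.
    by move=> g /=; rewrite properEneq eq_sym -andbA [X in _ && X]andbC.
  rewrite (partition_big (fun g => (H <*> 'C_G[g])%G) (fun M : {group gT} => (K \proper M) && (M \subset G))) /=; last first.
    by move=> g /andP [_ ->]; exact: D_sub.
  apply: eq_bigr => M /andP [pKM _]; rewrite /Bsum.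
  apply: eq_bigl => g; rewrite -val_eqE /=.
  case: eqP => [E | _]; last by rewrite !andbF.
  have pK : K \proper centralizing G H g by move: pKM; rewrite -E.
  by rewrite !andbT; case: (g \in H :* x) => //=; exact: pK.
move=> x y xK yK.
have := Aindep nHG cyc sHK sKG xK yK.
have ES : (\sum_(M : {group gT} | (K \proper M) && (M \subset G)) Bsum G H M x =
          \sum_(M : {group gT} | (K \proper M) && (M \subset G)) Bsum G H M y)%N.
  apply: eq_bigr => M /andP [pKM sMG]; apply: IH => //; exact: (subsetP (proper_sub pKM)).
rewrite !split ES; move/eqP.
by rewrite eqn_add2r => /eqP.
Qed.

Lemma Bind (gT : finGroupType) (G H : {group gT}) n :
  H <| G -> cyclic (G / H) ->
  forall K : {group gT}, (#|G| - #|K| <= n)%N -> H \subset K -> K \subset G ->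
  forall x y, x \in K -> y \in K -> Bsum G H K x = Bsum G H K y.
Proof.
move=> nHG cyc; elim: n => [|n IHn] K le sHK sKG; apply: stepK => // M pKM sMG.
  have := proper_card pKM; have := subset_leq_card sMG; lia.
apply: IHn => //; last exact: subset_trans sHK (proper_sub pKM).
have := proper_card pKM; have := subset_leq_card sMG; lia.
Qed.

Theorem theorem2p1 (gT : finGroupType) (G H K : {group gT}) :
  H <| G -> cyclic (G / H) -> H \subset K -> K \subset G ->
  forall x y : gT, x \in K -> y \in K ->
    nclasses_coset G H K x = nclasses_coset G H K y.
Proof.
move=> nHG cyc sHK sKG x y xK yK.
have ab := cyclic_abelian cyc.
have xG := subsetP sKG x xK; have yG := subsetP sKG y yK.
apply/eqP; rewrite -(eqn_pmul2l (cardG_gt0 G)) -(eqn_pmul2l (cardG_gt0 H)).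
rewrite !(step1 K nHG ab) // !(step2 K nHG) //.
by rewrite (Bind nHG cyc (leqnn _) sHK sKG xK yK).
Qed.
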